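(* Let $\mathcal{G}$ be an étale groupoid injectively graded by a countable discrete abelian group $A$ via $\Phi:\mathcal{G}\to A$, let $c:\mathcal{G}\to\mathbb{R}$ be a continuous groupoid homomorphism, $\beta\in\mathbb{R}$, and let $\mu\in\Delta(e^{-\beta c})\setminus\{0\}$ be ergodic. Then: (1) for every subgroup $C\subseteq A$, the set $X(C)=\{x\in\mathcal{G}^{(0)}:\Phi(\mathcal{G}^x_x)=C\}$ is Borel and invariant; (2) there is a unique subgroup $B\subseteq A$ with $\mu(\mathcal{G}^{(0)}\setminus X(B))=0$; (3) for $x\in X(B)$ let $\Phi_x:C^*(\mathcal{G}^x_x)\to C^*(B)$ be the isomorphism induced by $\Phi|_{\mathcal{G}^x_x}$ ($u_g\mapsto u_{\Phi(g)}$); if $\{\varphi_x\}_{x\in\mathcal{G}^{(0)}}$ is a $\mu$-measurable field of states with $\varphi_x(u_g)=\varphi_{r(h)}(u_{hgh^{-1}})$ for $\mu$-a.e. $x$ and all $g\in\mathcal{G}^x_x$, $h\in\mathcal{G}_x$, then there is a state $\varphi$ on $C^*(B)$ such that $\varphi\circ\Phi_x=\varphi_x$ for $\mu$-a.e. $x\in X(B)$.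
   Context: Étale groupoid: locally compact second countable Hausdorff groupoid with range $r$, source $s$ local homeomorphisms; $\mathcal{G}_x=s^{-1}(x)$, $\mathcal{G}^x_x=r^{-1}(x)\cap s^{-1}(x)$. $\mathcal{G}$ is injectively graded by $A$ via $\Phi$ if $\Phi:\mathcal{G}\to A$ is a continuous groupoid homomorphism with $\ker(\Phi)\cap\mathcal{G}^x_x=\{x\}$ for all $x\in\mathcal{G}^{(0)}$. $\Delta(e^{-\beta c})$: regular Borel measures on $\mathcal{G}^{(0)}$ quasi-invariant with Radon–Nikodym cocycle $e^{-\beta c}$, i.e. $\mu_r\sim\mu_s$ and $d\mu_r/d\mu_s=e^{-\beta c}$, where $\int f\,d\mu_r=\int\sum_{g\in r^{-1}(x)}f(g)\,d\mu(x)$, $\int f\,d\mu_s=\int\sum_{g\in s^{-1}(x)}f(g)\,d\mu(x)$ for $f\in C_c(\mathcal{G})$. A set $Y\subseteq\mathcal{G}^{(0)}$ is invariant if $Y=r(s^{-1}(Y))$; $\mu$ is ergodic if every invariant Borel set is null or conull. $u_g$ denote canonical unitaries in group $C^*$-algebras. A $\mu$-measurable field of states is a family of states $\varphi_x$ on $C^*(\mathcal{G}^x_x)$ with $x\mapsto\sum_{g\in\mathcal{G}^x_x}f(g)\varphi_x(u_g)$ $\mu$-measurable for all $f\in C_c(\mathcal{G})$. *)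

(* Defs.v *)
From HB Require Import structures.
From mathcomp Require Import all_boot all_order all_algebra.
From mathcomp Require Import all_classical all_reals all_analysis.
From mathcomp Require Import complex.
Set Implicit Arguments. Unset Strict Implicit. Unset Printing Implicit Defensive.
Import Order.TTheory GRing.Theory Num.Theory.
Import numFieldNormedType.Exports.
Local Open Scope classical_set_scope.
Local Open Scope ring_scope.

Definition Borel (X : ptopologicalType) := g_sigma_algebraType (@open X).

Section Groupoid.
(* Unit space X, arrow space G, range r, source s, unit map u : X -> G
   (x |-> the unit at x), partially defined multiplication mul (meaningful
   when s g = r h, i.e. mul g h = gh) and inverse inv. *)
Context (X : ptopologicalType) (G : topologicalType)
  (r s : G -> X) (u : X -> G) (mul : G -> G -> G) (inv : G -> G).

Definition groupoid_axioms : Prop :=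
  [/\ (forall x, r (u x) = x /\ s (u x) = x),
      (forall g, mul (u (r g)) g = g /\ mul g (u (s g)) = g),
      (forall g h, s g = r h -> r (mul g h) = r g /\ s (mul g h) = s h),
      (forall g h k, s g = r h -> s h = r k ->
         mul (mul g h) k = mul g (mul h k)) &
      ((forall g, r (inv g) = s g /\ s (inv g) = r g) /\
      (forall g, mul g (inv g) = u (r g) /\ mul (inv g) g = u (s g)))].

(* topological groupoid: all structure maps continuous, multiplication
   continuous on the composable pairs G^(2) (product topology); continuity
   of u and r makes u a homeomorphism of X onto the unit space of G. *)
Definition topological_groupoid : Prop :=
  [/\ continuous r, continuous s, continuous u, continuous inv &
      {within [set p : G * G | s p.1 = r p.2],
         continuous (fun p : G * G => mul p.1 p.2)}].

Definition local_homeomorphism (f : G -> X) : Prop :=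
  continuous f /\
  forall g, exists U : set G,
    [/\ open U, U g,
        (forall a b, U a -> U b -> f a = f b -> a = b) &
        (forall V, open V -> V `<=` U -> open (f @` V))].

Definition etale_groupoid : Prop :=
  [/\ groupoid_axioms, topological_groupoid,
      hausdorff_space G /\ locally_compact [set: G] /\ @second_countable G,
      local_homeomorphism r & local_homeomorphism s].

Definition isotropy (x : X) : set G := [set g | r g = x /\ s g = x].

Definition groupoid_invariant (Y : set X) : Prop := r @` (s @^-1` Y) = Y.

(* Phi : G -> A is a continuous groupoid homomorphism into the discrete group
   A (continuity into a discrete space = preimages of points are open) with
   ker(Phi) /\ G^x_x = {x} for every unit x. *)
Definition injective_grading (A : zmodType) (Phi : G -> A) : Prop :=
  [/\ (forall a : A, open (Phi @^-1` [set a])),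
      (forall g h, s g = r h -> Phi (mul g h) = Phi g + Phi h) &
      (forall x g, isotropy x g -> Phi g = 0 -> g = u x)].

Definition XC (A : zmodType) (Phi : G -> A) (C : set A) : set X :=
  [set x | Phi @` isotropy x = C].

Variable R : realType.

Definition continuous_hom (c : G -> R) : Prop :=
  continuous c /\ (forall g h, s g = r h -> c (mul g h) = c g + c h).

Definition Cc (f : G -> R) : Prop :=
  continuous f /\ compact (closure [set g | f g != 0]).

Definition regular_borel (mu : {measure set (Borel X) -> \bar R}) : Prop :=
  [/\ (forall K : set X, compact K -> (mu K < +oo)%E),
      (forall E : set (Borel X), measurable E ->
         mu E = ereal_inf [set mu U | U in [set U : set X | open U /\ E `<=` U]]) &
      (forall E : set (Borel X), measurable E ->
         mu E = ereal_sup [set mu K | K in [set K : set X | compact K /\ K `<=` E]])].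

(* mu in Delta(e^{-beta c}): mu is a regular Borel measure with
   d mu_r = e^{-beta c} d mu_s, where mu_r, mu_s are the measures on G given on
   f in C_c(G) by  int f dmu_r = int sum_{g in r^-1(x)} f(g) dmu(x)  and
   int f dmu_s = int sum_{g in s^-1(x)} f(g) dmu(x). *)
Definition in_Delta (beta : R) (c : G -> R)
    (mu : {measure set (Borel X) -> \bar R}) : Prop :=
  regular_borel mu /\
  forall f : G -> R, Cc f ->
    (\int[mu]_(x in setT) (\sum_(g \in r @^-1` [set x]) f g)%:E =
     \int[mu]_(x in setT)
        (\sum_(g \in s @^-1` [set x]) (f g * expR (- (beta * c g))))%:E)%E.

Definition ergodic (mu : {measure set (Borel X) -> \bar R}) : Prop :=
  forall Y : set (Borel X), measurable Y -> groupoid_invariant Y ->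
    mu Y = 0%E \/ mu (~` Y) = 0%E.

(* mu-measurable sets / functions: measurable for the mu-completion *)
Definition mu_measurable_set (mu : {measure set (Borel X) -> \bar R})
    (E : set X) : Prop :=
  exists B : set (Borel X), measurable B /\
    mu.-negligible ((E `\` B) `|` (B `\` E)).

Definition mu_measurable_fun (mu : {measure set (Borel X) -> \bar R})
    (h : X -> R) : Prop :=
  forall B : set R, measurable B -> mu_measurable_set mu (h @^-1` B).

(* A state on C*(G^x_x), recorded by its values p(g) = phi(u_g), g in G^x_x:
   phi(u_x) = phi(1) = 1 and phi(a^* a) >= 0 for every a = sum_i c_i u_{g_i}
   in the group algebra C[G^x_x] (which is dense in C*(G^x_x)). *)
Definition state_isotropy (x : X) (p : G -> R[i]) : Prop :=
  p (u x) = 1 /\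
  forall n (cs : 'I_n -> R[i]) (gs : 'I_n -> G),
    (forall k, isotropy x (gs k)) ->
    0 <= \sum_(k < n) \sum_(l < n) ((cs k)^* * cs l * p (mul (inv (gs k)) (gs l))).

(* mu-measurable field of states {phi_x}: for each f in C_c(G) (real and
   imaginary parts treated separately) the function
   x |-> sum_{g in G^x_x} f(g) phi_x(u_g) is mu-measurable. *)
Definition measurable_field_of_states (mu : {measure set (Borel X) -> \bar R})
    (phi : X -> G -> R[i]) : Prop :=
  (forall x, state_isotropy x (phi x)) /\
  forall f : G -> R, Cc f ->
    mu_measurable_fun mu
      (fun x => complex.Re (\sum_(g \in isotropy x) ((f g)%:C%C * phi x g))) /\
    mu_measurable_fun mu
      (fun x => complex.Im (\sum_(g \in isotropy x) ((f g)%:C%C * phi x g))).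

End Groupoid.

Definition is_subgroup (A : zmodType) (C : set A) : Prop :=
  C 0 /\ forall a b, C a -> C b -> C (a - b).

(* A state on C*(B), B a subgroup of the abelian group A, recorded by its
   values psi(b) = phi(u_b) for b in B (values off B are irrelevant). *)
Definition state_group (R : realType) (A : zmodType) (B : set A)
    (psi : A -> R[i]) : Prop :=
  psi 0 = 1 /\
  forall n (cs : 'I_n -> R[i]) (bs : 'I_n -> A),
    (forall k, B (bs k)) ->
    0 <= \sum_(k < n) \sum_(l < n) ((cs k)^* * cs l * psi (bs l - bs k)).

(* Main.v *)
Require Import Defs.
From HB Require Import structures.
From mathcomp Require Import all_boot all_order all_algebra.
From mathcomp Require Import all_classical all_reals all_analysis.
From mathcomp Require Import complex.
From mathcomp Require Import lra.
Import Order.TTheory GRing.Theory Num.Theory.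
Local Open Scope classical_set_scope.
Local Open Scope ring_scope.
Module Aux.
Set Implicit Arguments. Unset Strict Implicit.

Section GA.
Context (X : ptopologicalType) (G : topologicalType)
  (r s : G -> X) (u : X -> G) (mul : G -> G -> G) (inv : G -> G)
  (A : zmodType) (Phi : G -> A).
Hypothesis ga : groupoid_axioms r s u mul inv.
Hypothesis gr : injective_grading r s u mul Phi.

Lemma ga_ru x : r (u x) = x. Proof. by case: ga => /(_ x) []. Qed.
Lemma ga_su x : s (u x) = x. Proof. by case: ga => /(_ x) []. Qed.
Lemma ga_mulrs g h : s g = r h -> r (mul g h) = r g /\ s (mul g h) = s h.
Proof. by case: ga => _ _ H _ _; apply: H. Qed.
Lemma ga_rinv g : r (inv g) = s g. Proof. by case: ga => _ _ _ _ [/(_ g) []]. Qed.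
Lemma ga_sinv g : s (inv g) = r g. Proof. by case: ga => _ _ _ _ [/(_ g) []]. Qed.
Lemma ga_mulV g : mul g (inv g) = u (r g). Proof. by case: ga => _ _ _ _ [_ /(_ g) []]. Qed.
Lemma ga_mulVl g : mul (inv g) g = u (s g). Proof. by case: ga => _ _ _ _ [_ /(_ g) []]. Qed.
Lemma ga_mul1 g : mul (u (r g)) g = g. Proof. by case: ga => _ /(_ g) []. Qed.
Lemma ga_mul1r g : mul g (u (s g)) = g. Proof. by case: ga => _ /(_ g) []. Qed.
Lemma ga_assoc g h k : s g = r h -> s h = r k -> mul (mul g h) k = mul g (mul h k).
Proof. by case: ga => _ _ _ H _; apply: H. Qed.

Lemma Phi_mul g h : s g = r h -> Phi (mul g h) = Phi g + Phi h.
Proof. by case: gr => _ H _; apply: H. Qed.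

Lemma Phi_u x : Phi (u x) = 0.
Proof.
have e : mul (u x) (u x) = u x by have := ga_mul1 (u x); rewrite ga_ru.
have := @Phi_mul (u x) (u x); rewrite ga_su ga_ru e => /(_ erefl) h.
by apply/esym; apply: (addIr (Phi (u x))); rewrite add0r -h.
Qed.

Lemma Phi_inv g : Phi (inv g) = - Phi g.
Proof.
have := @Phi_mul g (inv g); rewrite ga_rinv ga_mulV Phi_u => /(_ erefl) /eqP.
by rewrite eq_sym addr_eq0 => /eqP ->; rewrite opprK.
Qed.

Lemma iso_uniq x g g' : isotropy r s x g -> isotropy r s x g' -> Phi g = Phi g' -> g = g'.
Proof.
move=> [rg sg] [rg' sg'] e.
have c1 : s (inv g') = r g by rewrite ga_sinv rg rg'.
have [rk sk] := ga_mulrs c1.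
have k1 : mul (inv g') g = u x.
  case: gr => _ _ H; apply: H; first by split; [rewrite rk ga_rinv | rewrite sk].
  by rewrite Phi_mul // Phi_inv e addNr.
have c2 : s g' = r (inv g') by rewrite ga_rinv.
have := ga_assoc c2 c1; rewrite ga_mulV k1 -sg' ga_mul1r rg' -rg ga_mul1.
by move->.
Qed.

Lemma conj_iso x g h : isotropy r s x g -> s h = x ->
  isotropy r s (r h) (mul (mul h g) (inv h)) /\ Phi (mul (mul h g) (inv h)) = Phi g.
Proof.
move=> [rg sg] sh.
have c1 : s h = r g by rewrite sh rg.
have [rhg shg] := ga_mulrs c1.
have c2 : s (mul h g) = r (inv h) by rewrite shg ga_rinv sg sh.
have [r2 s2] := ga_mulrs c2.
split; first by split; rewrite ?r2 ?s2 ?rhg ?ga_sinv.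
by rewrite Phi_mul // Phi_mul // Phi_inv addrC addKr.
Qed.

Lemma Phi_iso_sub h : Phi @` isotropy r s (s h) `<=` Phi @` isotropy r s (r h).
Proof.
move=> a [g ig <-]; have [i e] := conj_iso ig erefl.
by exists (mul (mul h g) (inv h)).
Qed.

Lemma Phi_iso_eq h : Phi @` isotropy r s (s h) = Phi @` isotropy r s (r h).
Proof.
apply/seteqP; split; first exact: Phi_iso_sub.
by have := @Phi_iso_sub (inv h); rewrite ga_rinv ga_sinv.
Qed.

Lemma XC_inv (C : set A) : groupoid_invariant r s (XC r s Phi C).
Proof.
apply/seteqP; split.
  by move=> y [h /= xh <-]; rewrite /XC /= -Phi_iso_eq.
by move=> x Cx; exists (u x); rewrite /= ?ga_su ?ga_ru.
Qed.

Lemma sat_inv (S : set X) : groupoid_invariant r s (r @` (s @^-1` S)).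
Proof.
apply/seteqP; split.
  move=> y [h [g /= Sg rgsh] <-].
  have c : s h = r g by [].
  have [e1 e2] := ga_mulrs c.
  by exists (mul h g) => //=; rewrite e2.
by move=> x Sx; exists (u x); rewrite /= ?ga_su ?ga_ru.
Qed.

End GA.

Lemma sigma_ind (T : Type) (Gen P : set (set T)) :
  sigma_algebra setT P -> Gen `<=` P -> <<s Gen >> `<=` P.
Proof. by move=> sP GP; apply: smallest_sub. Qed.

Section Top.
Context (X : ptopologicalType) (G : topologicalType)
  (r s : G -> X) (u : X -> G) (mul : G -> G -> G) (inv : G -> G).
Hypothesis et : etale_groupoid r s u mul inv.

Definition mX (S : set X) := measurable (S : set (Borel X)).
Definition BG (S : set G) := <<s @open G >> S.

Lemma mX_open (O : set X) : open O -> mX O.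
Proof. by move=> oO; apply: sub_sigma_algebra. Qed.

Lemma BG_open (O : set G) : open O -> BG O.
Proof. by move=> oO; apply: sub_sigma_algebra. Qed.

Lemma BGC (S : set G) : BG S -> BG (~` S).
Proof. by move=> h; rewrite -setTD; apply: sigma_algebraCD. Qed.

Lemma BGI (S T : set G) : BG S -> BG T -> BG (S `&` T).
Proof.
move=> hS hT; rewrite -[S `&` T]setCK setCI.
apply: BGC; rewrite -bigcup2E; apply: sigma_algebra_bigcup => -[|[|n]] /=;
  by [apply: BGC|apply: BGC|apply: sigma_algebra0].
Qed.

Lemma ga : groupoid_axioms r s u mul inv. Proof. by case: et. Qed.

Lemma cont_r : continuous r. Proof. by case: et => _ [] . Qed.
Lemma cont_s : continuous s. Proof. by case: et => _ [] . Qed.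
Lemma cont_u : continuous u. Proof. by case: et => _ [] . Qed.

Lemma preim_B (f : G -> X) : continuous f -> forall S, mX S -> BG (f @^-1` S).
Proof.
move=> cf S; apply: (@sigma_ind _ _ (fun S => BG (f @^-1` S))).
  split.
  - by rewrite preimage_set0; apply: sigma_algebra0.
  - by move=> B hB; rewrite setTD -preimage_setC; apply: BGC.
  - by move=> F hF; rewrite preimage_bigcup; apply: sigma_algebra_bigcup.
by move=> O oO; apply: BG_open; move/continuousP: cf; apply.
Qed.

Definition goodW (W : set G) := [/\ open W,
  (forall a b, W a -> W b -> r a = r b -> a = b) &
  (forall V, open V -> V `<=` W -> open (r @` V))].

Lemma img_B W : goodW W -> forall S, BG S -> mX (r @` (W `&` S)).
Proof.
move=> [oW iW omW] S; apply: (@sigma_ind _ _ (fun S => mX (r @` (W `&` S)))).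
  split.
  - by rewrite setI0 image_set0; apply: measurable0.
  - move=> B hB.
    have -> : r @` (W `&` (setT `\` B)) = r @` W `\` r @` (W `&` B).
      apply/seteqP; split.
        move=> x [g [Wg [_ nBg]] <-]; split; first by exists g.
        by move=> [g' [Wg' Bg'] e]; apply: nBg; rewrite (iW g g').
      by move=> x [[g Wg <-] nx]; exists g => //; split => //; split => // Bg; apply: nx; exists g.
    apply: measurableD => //; apply: mX_open; exact: omW.
  - move=> F hF; rewrite setI_bigcupr image_bigcup.
    exact: bigcupT_measurable.
move=> O oO; apply: mX_open; apply: omW; [exact: openI|exact: subIsetl].
Qed.

Lemma basis_enum : exists e : nat -> set G,
  forall g (O : set G), open O -> O g -> exists n, [/\ goodW (e n), e n g & e n `<=` O].
Proof.
case: et => _ _ [_ [_ [Bs cBs [Bop Bnb]]]] [_ lhr] _.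
have [f finj] := countable_injP _ cBs.
pose e n : set G := match pselect (exists b, Bs b /\ f b = n) with
  | left p => proj1_sig (cid p) | right _ => set0 end.
exists e => g O oO Og.
have [U [oU Ug iU omU]] := lhr g.
have : nbhs g (O `&` U) by apply: open_nbhs_nbhs; split => //; exact: openI.
move=> /Bnb [b [Bb bg] bOU].
have ex : exists b', Bs b' /\ f b' = f b by exists b.
have eb : e (f b) = b.
  rewrite /e; case: pselect => [p|//]; case: cid => b' [Bb' fb'] /=.
  by apply: finj; rewrite ?inE.
exists (f b); rewrite eb; split => //; last by move=> x /bOU [].
split; first exact: Bop.
  by move=> a c /bOU [_ Ua] /bOU [_ Uc]; apply: iU.
by move=> V oV Vb; apply: omU => // x /Vb /bOU [].
Qed.

End Top.

Section Top2.
Context (X : ptopologicalType) (G : topologicalType)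
  (r s : G -> X) (u : X -> G) (mul : G -> G -> G) (inv : G -> G).
Hypothesis et : etale_groupoid r s u mul inv.

Definition Iso := [set g : G | r g = s g].

Lemma Iso_openC : open (~` Iso).
Proof.
have hG : hausdorff_space G by case: et => _ _ [].
rewrite open_hausdorff in hG.
rewrite openE => g ng; rewrite /interior nbhsE /=.
have neq : u (r g) != u (s g).
  by apply/eqP => /(congr1 r); rewrite !(ga_ru (ga et)).
case: (hG _ _ neq) => p [h1 h2] [oV1 oV2 /eqP V12].
move: p h1 h2 oV1 oV2 V12 => [V1 V2] /= /set_mem h1 /set_mem h2 oV1 oV2 V12.
exists (r @^-1` (u @^-1` V1) `&` s @^-1` (u @^-1` V2)).
  split; last by split.
  have pr := (@continuousP _ _ _).1 (cont_r et).
  have ps := (@continuousP _ _ _).1 (cont_s et).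
  have pu := (@continuousP _ _ _).1 (cont_u et).
  by apply: openI; [apply: pr; apply: pu|apply: ps; apply: pu].
move=> x [/= a1 a2] ex; have : (V1 `&` V2) (u (r x)) by split => //; rewrite ex.
by rewrite V12.
Qed.

Lemma Iso_B : BG Iso.
Proof. by rewrite -[Iso]setCK; apply: BGC; apply: BG_open; exact: Iso_openC. Qed.

Lemma sat_meas S : mX S -> mX (r @` (s @^-1` S)).
Proof.
move=> mS; have [e he] := basis_enum et.
have -> : r @` (s @^-1` S) =
    \bigcup_(n in [set n | goodW r (e n)]) r @` (e n `&` s @^-1` S).
  apply/seteqP; split.
    move=> x [g Sg <-]; have [n [gn eng _]] := he g setT openT I.
    by exists n => //; exists g.
  by move=> x [n _ [g [_ Sg] <-]]; exists g.
apply: bigcup_measurable => n gn; apply: img_B => //; apply: preim_B => //.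
exact: cont_s et.
Qed.

Definition Ya (A : zmodType) (Phi : G -> A) (a : A) :=
  [set x | (Phi @` isotropy r s x) a].

Lemma Ya_meas (A : zmodType) (Phi : G -> A) :
  injective_grading r s u mul Phi -> forall a, mX (Ya Phi a).
Proof.
move=> [oPhi _ _] a; have [e he] := basis_enum et.
have -> : Ya Phi a =
    \bigcup_(n in [set n | goodW r (e n)]) r @` (e n `&` (Iso `&` Phi @^-1` [set a])).
  apply/seteqP; split.
    move=> x [g [rg sg] <-]; have [n [gn eng _]] := he g setT openT I.
    by exists n => //; exists g => //; split => //; split => //; rewrite /Iso /= rg sg.
  by move=> x [n _ [g [_ [Ig /= Pg]] <-]]; exists g.
apply: bigcup_measurable => n gn; apply: img_B => //; apply: BGI; first exact: Iso_B.
by apply: BG_open.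
Qed.

Lemma XC_meas (A : countZmodType) (Phi : G -> A) :
  injective_grading r s u mul Phi -> forall C : set A, mX (XC r s Phi C).
Proof.
move=> gr C.
pose Z a := match pselect (C a) with left _ => ~` Ya Phi a | right _ => Ya Phi a end.
have -> : XC r s Phi C = ~` \bigcup_a Z a.
  apply/seteqP; split.
    move=> x Cx [a _]; have Cx' : Phi @` isotropy r s x = C := Cx.
    rewrite /Z; case: pselect => Ca.
      by apply; change ((Phi @` isotropy r s x) a); rewrite Cx'.
    by change ((Phi @` isotropy r s x) a -> False); rewrite Cx'.
  move=> x nZ; change (Phi @` isotropy r s x = C); apply/seteqP; split => a.
    move=> Ya'; apply: contrapT => nCa; apply: nZ; exists a => //.
    by rewrite /Z; case: pselect.
  move=> Ca; apply: contrapT => nY; apply: nZ; exists a => //.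
  by rewrite /Z; case: pselect.
apply: measurableC; apply: countable_bigcupT_measurable; first exact: countableP.
move=> a; rewrite /Z; case: pselect => _; last exact: Ya_meas.
by apply: measurableC; apply: Ya_meas.
Qed.

End Top2.

Import numFieldNormedType.Exports.

Lemma lc_bump (R : realType) (G : topologicalType) : locally_compact [set: G] ->
  hausdorff_space G ->
  forall (O : set G) g, open O -> O g ->
  exists f : G -> R, [/\ continuous f, compact (closure [set y | f y != 0]),
     [set y | f y != 0] `<=` O &
     exists V : set G, [/\ open V, V g & V `<=` [set y | f y = 1]]].
Proof.
move=> lc hG O g oO Og.
have [K Kn [cK clK]] := lc g I.
move: Kn; rewrite /within nbhsE => -[N [oN Ng] NK].
pose O' := O `&` N.
have cr := @locally_compact_completely_regular G R lc hG.
have sep : uniform_separator [set g] (~` O').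
  apply: cr; first by rewrite closedC; exact: openI.
  by move=> /(_ (conj Og Ng)).
pose h := Urysohn (R := R) [set g] (~` O').
have hc : continuous h := @Urysohn_continuous _ _ _ _.
have h0 : h g = 0 by apply: (Urysohn_sub0 sep); exists g.
have h1 : forall y, ~ O' y -> h y = 1 by move=> y nO; apply: (Urysohn_sub1 sep); exists y.
have hr : forall y, 0 <= h y <= 1.
  move=> y; have := @Urysohn_range _ R [set g] (~` O') (h y) (ex_intro2 _ _ y I erefl).
  move=> H; have := @in_itv _ _ (h y) `[0, 1]. rewrite /=. move=> <-. exact: H.
pose f y := Num.min 1 (2 * (1 - h y)).
exists f; split.
- move=> y; apply: (@continuous_min R G (fun _ => 1) (fun y => 2 * (1 - h y))).
    exact: cst_continuous.
  apply: continuousM; first exact: cst_continuous.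
  by apply: continuousB; [exact: cst_continuous|exact: hc].
- apply: (subclosed_compact _ cK); first exact: closed_closure.
  rewrite (closure_id K).1 //; apply: closureS => y fy.
  have [Ny|nN] := pselect (N y); first exact: NK Ny I.
  move: fy; rewrite /f /= h1 ?subrr ?mulr0; first by rewrite (_ : Num.min 1 0 = 0) ?eqxx //; apply/min_idPr; exact: ler01.
  by case.
- move=> y fy; apply: contrapT => nO; move: fy; rewrite /f /= h1 ?subrr ?mulr0.
    by rewrite (_ : Num.min 1 0 = 0) ?eqxx //; apply/min_idPr; exact: ler01.
  by case.
exists (h @^-1` [set t | t < 2^-1]); split.
- by apply: ((@continuousP _ _ _).1 hc); exact: open_lt.
- by rewrite /= h0 invr_gt0 ltr0n.
move=> y /= hy; rewrite /f; apply/min_idPl; lra.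
Qed.

Section Const.
Context d (T : measurableType d) (R : realType) (mu : {measure set T -> \bar R}).

Lemma neg_bigcupP (P : set nat) (F : nat -> set T) :
  (forall n, P n -> mu.-negligible (F n)) -> mu.-negligible (\bigcup_(n in P) F n).
Proof.
move=> h.
have -> : \bigcup_(n in P) F n = \bigcup_n (if pselect (P n) is left _ then F n else set0).
  apply/seteqP; split => [x [n Pn Fx]|x [n _]].
    by exists n => //; case: pselect.
  by case: pselect => // Pn Fx; exists n.
apply: negligible_bigcup => n; case: pselect => Pn; first exact: h.
exact: negligible_set0.
Qed.

Lemma arch_lt (a : R) : exists n : nat, a < n%:R.
Proof. by exists (Num.truncn a).+1; exact: truncnS_gt. Qed.

Lemma le_of_all (a c : R) : (forall k : nat, a <= c + k.+1%:R^-1) -> a <= c.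
Proof.
move=> h; rewrite leNgt; apply/negP => ca.
have [k hk] := arch_lt (a - c)^-1.
have hk' : (k.+1%:R)^-1 < a - c.
  rewrite -[X in _ < X]invrK; rewrite ltf_pV2 ?posrE ?invr_gt0 ?subr_gt0 //.
  by apply: (lt_trans hk); rewrite ltr_nat.
have := h k; move: hk'; set t := k.+1%:R^-1; lra.
Qed.

Lemma ge_of_all (a c : R) : (forall k : nat, c - k.+1%:R^-1 < a) -> c <= a.
Proof.
move=> h; rewrite -[c]opprK -[a]opprK lerN2; apply: le_of_all => k.
have := h k; set t := k.+1%:R^-1; lra.
Qed.

Lemma const_ae (D : set T) (phi : T -> R) :
  mu.-negligible (~` D) -> ~ mu.-negligible setT ->
  (forall q, mu.-negligible [set x | D x /\ q < phi x] \/
             mu.-negligible (~` [set x | D x /\ q < phi x])) ->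
  exists c, {ae mu, forall x, D x -> phi x = c}.
Proof.
move=> nD nT dich.
pose En q := [set x | D x /\ q < phi x].
pose Good q := mu.-negligible (~` En q).
have down q q' : q' <= q -> Good q -> Good q'.
  move=> le; apply: negligibleS => x nE [Dx lt]; apply: nE; split => //.
  exact: le_lt_trans lt.
have ex : exists q, Good q.
  apply: contrapT => nG; apply: nT.
  have : mu.-negligible (~` D `|` \bigcup_n En (- n%:R)).
    apply: negligibleU => //; apply: negligible_bigcup => n.
    by case: (dich (- n%:R)) => // Gn; exfalso; apply: nG; exists (- n%:R).
  apply: negligibleS => x _; have [Dx|] := pselect (D x); last by left.
  right; have [n hn] := arch_lt (- phi x); exists n => //; split => //; lra.
have bnd : exists n : nat, ~ Good n%:R.
  apply: contrapT => /forallNP hG; apply: nT.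
  have hG' : forall n : nat, Good n%:R by move=> n; apply: contrapT; apply: hG.
  have : mu.-negligible (\bigcup_n ~` En n%:R) by apply: negligible_bigcup.
  apply: negligibleS => x _.
  have [n hn] := arch_lt (phi x).
  exists n => //; case => _; lra.
have [n0 hn0] := bnd.
have ub : ubound Good n0%:R.
  move=> q Gq; rewrite leNgt; apply/negP => lt; apply: hn0.
  exact: down _ _ (ltW lt) Gq.
have hs : has_sup Good by split => //; exists n0%:R.
pose c := sup Good.
exists c.
have up : mu.-negligible (\bigcup_k En (c + k.+1%:R^-1)).
  apply: negligible_bigcup => k.
  case: (dich (c + k.+1%:R^-1)) => // Gk.
  have := sup_upper_bound hs Gk; rewrite -/c.
  have : 0 < k.+1%:R^-1 :> R by rewrite invr_gt0 ltr0n.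
  set t := k.+1%:R^-1; move=> ? ?; exfalso; lra.
have lo : mu.-negligible (\bigcup_k ~` En (c - k.+1%:R^-1)).
  apply: negligible_bigcup => k.
  have kp : 0 < k.+1%:R^-1 :> R by rewrite invr_gt0 ltr0n.
  have [q Gq lt] := sup_adherent kp hs.
  by apply: down Gq; rewrite -/c; apply: ltW.
have [N [mN N0 sN]] := negligibleU up lo.
exists N; split => //.
move=> x /= nx; apply: contrapT => hx; apply: nx => Dx.
apply/eqP; rewrite eq_le; apply/andP; split.
  apply: le_of_all => k; rewrite leNgt; apply/negP => lt.
  by apply: hx; apply: sN; left; exists k => //.
apply: ge_of_all => k; rewrite ltNge; apply/negP => le.
apply: hx; apply: sN; right; exists k => //; case => _; move: le; set t := k.+1%:R^-1; lra.
Qed.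

End Const.

Section MM.
Context (R : realType) (X : ptopologicalType) (mu : {measure set (Borel X) -> \bar R}).

Local Notation mm := (mu_measurable_set mu).

Lemma mm_B (S : set X) : mX S -> mm S.
Proof.
move=> mS; exists S; split => //.
by rewrite setDv setU0; exact: negligible_set0.
Qed.

Lemma mm_IB (E S : set X) : mm E -> mX S -> mm (E `&` S).
Proof.
move=> [B [mB nB]] mS; exists (B `&` S); split; first exact: measurableI.
apply: negligibleS nB => x [[[Ex Sx] nBS]|[[Bx Sx] nES]].
  by left; split => // Bx; apply: nBS.
by right; split => // Ex; apply: nES.
Qed.

Lemma mm_bigcup (P : set nat) (F : nat -> set X) :
  (forall n, P n -> mm (F n)) -> mm (\bigcup_(n in P) F n).
Proof.
move=> h.
pose B n := if pselect (P n) is left p then proj1_sig (cid (h n p)) else set0.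
have hB n : P n -> mX (B n) /\
    mu.-negligible ((F n `\` B n) `|` (B n `\` F n)).
  by move=> Pn; rewrite /B; case: pselect => // p; case: cid => /= b [].
exists (\bigcup_(n in P) B n); split.
  by apply: bigcup_measurable => n Pn; have [] := hB n Pn.
have H : mu.-negligible (\bigcup_(n in P) ((F n `\` B n) `|` (B n `\` F n))).
  by apply: neg_bigcupP => n Pn; exact: (hB n Pn).2.
apply: negligibleS H.
move=> x [[[n Pn Fx] nB]|[[n Pn Bx] nF]].
  exists n => //; left; split => // Bx; apply: nB; by exists n.
exists n => //; right; split => // Fx; apply: nF; by exists n.
Qed.

End MM.

Section Erg.
Context (R : realType) (X : ptopologicalType) (G : topologicalType)
  (r s : G -> X) (u : X -> G) (mul : G -> G -> G) (inv : G -> G)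
  (mu : {measure set (Borel X) -> \bar R}).
Hypothesis et : etale_groupoid r s u mul inv.
Hypothesis erg : ergodic r s mu.

Lemma negB (S : set X) : mX S -> mu S = 0%E -> mu.-negligible S.
Proof. by move=> mS S0; exists S; split. Qed.

Lemma erg_mm (E M : set X) : mX M -> mu (~` M) = 0%E -> mu_measurable_set mu E ->
  (forall h, M (s h) -> (E (s h) <-> E (r h))) ->
  mu.-negligible E \/ mu.-negligible (~` E).
Proof.
move=> mM M0 mE hinv. case: mE => B0 [mB0 nZ0]. case: nZ0 => Z [mZ Z0 sZ].
pose M' := M `&` ~` Z.
have mM' : mX M' by apply: measurableI => //; apply: measurableC.
pose S := B0 `&` M'.
pose Y := r @` (s @^-1` S).
have mS : mX S by exact: measurableI.
have mY : mX Y := sat_meas et mS.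
have iY : groupoid_invariant r s Y := sat_inv (ga et) S.
have EB x : M' x -> (E x <-> B0 x).
  move=> [Mx nZx]; split => [Ex|Bx]; apply: contrapT => nx; apply: nZx; apply: sZ.
    by left.
  by right.
have k1 : S `<=` Y.
  by move=> x Sx; exists (u x); rewrite /= ?(ga_su (ga et)) ?(ga_ru (ga et)).
have k2 y : Y y -> M' y -> E y.
  move=> [h /= Sh <-] _.
  have [Bh Mh] := Sh; have := (EB _ Mh).2 Bh.
  by move/(hinv h Mh.1).
have nM : mu.-negligible (~` M) by apply: negB => //; apply: measurableC.
have nZ : mu.-negligible Z by apply: negB.
case: (erg mY iY) => Y0.
  left; have nY : mu.-negligible Y by apply: negB.
  have := negligibleU (negligibleU nY nM) nZ.
  apply: negligibleS => x Ex.
  have [Mx|] := pselect (M x); last by left; right.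
  have [Zx|nZx] := pselect (Z x); first by right.
  left; left; apply: k1; split; last by split.
  by apply: (EB _ (conj Mx nZx)).1.
right; have nY : mu.-negligible (~` Y) by apply: negB => //; apply: measurableC.
have := negligibleU (negligibleU nY nM) nZ.
apply: negligibleS => x nEx.
have [Mx|] := pselect (M x); last by left; right.
have [Zx|nZx] := pselect (Z x); first by right.
left; left => Yx; apply: nEx; exact: k2.
Qed.

End Erg.

Section Field.
Context (R : realType) (X : ptopologicalType) (G : topologicalType)
  (r s : G -> X) (u : X -> G) (mul : G -> G -> G) (inv : G -> G)
  (A : countZmodType) (Phi : G -> A)
  (mu : {measure set (Borel X) -> \bar R}) (phi : X -> G -> R[i]).
Hypothesis et : etale_groupoid r s u mul inv.
Hypothesis gr : injective_grading r s u mul Phi.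

Definition Sf (f : G -> R) (x : X) : R[i] :=
  \sum_(g \in isotropy r s x) ((f g)%:C%C * phi x g).

Definition gsel (b : A) (x : X) : G :=
  match pselect (exists g, isotropy r s x g /\ Phi g = b) with
  | left e => proj1_sig (cid e) | right _ => u x end.

Lemma gsel_spec b x g : isotropy r s x g -> Phi g = b -> gsel b x = g.
Proof.
move=> ig Pg; rewrite /gsel; case: pselect => [p|[]]; last by exists g.
case: cid => g' [ig' Pg'] /=.
by apply: (iso_uniq (ga et) gr ig' ig); rewrite Pg Pg'.
Qed.

Definition Fb (b : A) (x : X) : R[i] := phi x (gsel b x).

Lemma Sf_piece f W b x g : goodW r W -> [set y | f y != 0] `<=` W ->
  W `<=` Phi @^-1` [set b] -> isotropy r s x g -> f g = 1 ->
  Sf f x = Fb b x.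
Proof.
move=> [oW iW _] fW WP ig fg1.
have Wg : W g by apply: fW; rewrite /= fg1 oner_neq0.
rewrite /Fb (gsel_spec ig (WP _ Wg)) /Sf.
rewrite -(fsbig_widen [set g] (isotropy r s x)); first last.
- move=> y [iy /= ny]; rewrite /= (_ : f y = 0) ?mul0r //.
  have [//|fy0] := eqVneq (f y) 0; exfalso; apply: ny.
  apply: iW => //; first exact: fW.
  by case: iy => -> _; case: ig => -> _.
- by move=> y ->.
by rewrite fsbig_set1 fg1 mul1r.
Qed.

Lemma meas_gt (q : R) : measurable [set t : R | q < t].
Proof.
rewrite (_ : [set t | q < t] = `]q, +oo[%classic); first exact: measurable_itv.
by apply/seteqP; split => t /=; rewrite in_itv /= andbT.
Qed.

Lemma MeasF (pr : R[i] -> R) (B : set A) (b : A) :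
  (forall f, Cc f -> mu_measurable_fun mu (fun x => pr (Sf f x))) ->
  B b -> forall q,
  mu_measurable_set mu [set x | XC r s Phi B x /\ q < pr (Fb b x)].
Proof.
move=> hmf Bb q.
have [e he] := basis_enum et.
have [hG [lc _]] : hausdorff_space G /\ locally_compact [set: G] /\ @second_countable G.
  by case: et => _ _ [].
pose Q n (f : G -> R) := [/\ Cc f, goodW r (e n), e n `<=` [set y | f y = 1] &
   exists W, [/\ goodW r W, [set y | f y != 0] `<=` W & W `<=` Phi @^-1` [set b]]].
pose Pn n := exists f, Q n f.
pose fn n : G -> R := if pselect (Pn n) is left p then proj1_sig (cid p) else (fun _ => 0).
have Qf n : Pn n -> Q n (fn n).
  by move=> p; rewrite /fn; case: pselect => // p'; case: cid.
pose piece n := r @` (e n `&` Iso r s).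
have -> : [set x | XC r s Phi B x /\ q < pr (Fb b x)] =
   \bigcup_(n in Pn) (([set x | q < pr (Sf (fn n) x)] `&` XC r s Phi B) `&` piece n).
  apply/seteqP; split.
    move=> x [Bx qx].
    have [g ig Pg] : (Phi @` isotropy r s x) b by rewrite Bx.
    have oPb : open (Phi @^-1` [set b]) by case: gr.
    have [n0 [gn0 e0g e0P]] := he g (Phi @^-1` [set b]) oPb Pg.
    have [gn0o _ _] := gn0.
    have [f [cf cpf fW [V [oV Vg Vf]]]] := @lc_bump R _ lc hG _ _ gn0o e0g.
    have [n [gn eng enV]] := he g (V `&` e n0) (openI oV gn0o) (conj Vg e0g).
    have Qn : Q n f.
      split => //; first by move=> y /enV [/Vf].
      by exists (e n0); split => // y /e0P.
    exists n; first by exists f.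
    split; last by exists g; [split => //; rewrite /Iso /=; case: ig => -> -> | case: ig].
    split => //; have [_ _ fn1 [W [gW fnW WP]]] := Qf n (ex_intro _ f Qn).
    by rewrite /= (Sf_piece gW fnW WP ig (fn1 _ eng)).
  move=> x [n Pn' [[/= qx Bx] [g [eng Ig] rgx]]].
  have [_ _ fn1 [W [gW fnW WP]]] := Qf n Pn'.
  have ig : isotropy r s x g by split; rewrite -rgx // -Ig.
  by split => //; rewrite -(Sf_piece gW fnW WP ig (fn1 _ eng)).
apply: mm_bigcup => n Pn'.
have [cf gen _ _] := Qf n Pn'.
apply: mm_IB; first apply: mm_IB.
- have H := hmf _ cf _ (meas_gt q). exact: H.
- have H := XC_meas et gr B. exact: H.
- have H := img_B gen (Iso_B et). exact: H.
Qed.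

End Field.

Section Count.
Context d (T : measurableType d) (R : realType) (mu : {measure set T -> \bar R}).

Lemma neg_countable (I : countType) (F : I -> set T) :
  (forall i, mu.-negligible (F i)) -> mu.-negligible (\bigcup_i F i).
Proof.
move=> h.
have H : mu.-negligible (\bigcup_n (if @unpickle I n is Some i then F i else set0)).
  by apply: negligible_bigcup => n; case: unpickle => [i|]; [exact: h|exact: negligible_set0].
apply: negligibleS H => x [i _ Fx]; exists (pickle i) => //; by rewrite pickleK.
Qed.

Lemma ae_countable (I : countType) (P : I -> T -> Prop) :
  (forall i, {ae mu, forall x, P i x}) -> {ae mu, forall x, forall i, P i x}.
Proof.
move=> h.
have H : {ae mu, forall x, forall n, if @unpickle I n is Some i then P i x else True}.
  apply: ae_foralln => n; case: unpickle => [i|]; first exact: h.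
  by apply: aeW.
by apply: filterS H => x Hx i; have := Hx (pickle i); rewrite pickleK.
Qed.

End Count.

Section Div.
Context (X : ptopologicalType) (G : topologicalType)
  (r s : G -> X) (u : X -> G) (mul : G -> G -> G) (inv : G -> G)
  (A : zmodType) (Phi : G -> A).
Hypothesis ga : groupoid_axioms r s u mul inv.
Hypothesis gr : injective_grading r s u mul Phi.

Lemma iso_div x g g' : isotropy r s x g -> isotropy r s x g' ->
  isotropy r s x (mul (inv g') g) /\ Phi (mul (inv g') g) = Phi g - Phi g'.
Proof.
move=> [rg sg] [rg' sg'].
have c : s (inv g') = r g by rewrite (ga_sinv ga) rg rg'.
have [e1 e2] := ga_mulrs ga c.
split; first by split; rewrite ?e1 ?e2 ?(ga_rinv ga).
by rewrite (Phi_mul gr c) (Phi_inv ga gr) addrC.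
Qed.

Lemma iso_u x : isotropy r s x (u x).
Proof. by split; rewrite ?(ga_ru ga) ?(ga_su ga). Qed.

Lemma iso_zero x g : isotropy r s x g -> Phi g = 0 -> g = u x.
Proof. by case: gr => _ _ H; apply: H. Qed.

End Div.


End Aux.
Import Aux.

Theorem theorem7p3 (R : realType) (X : ptopologicalType) (G : topologicalType)
    (r s : G -> X) (u : X -> G) (mul : G -> G -> G) (inv : G -> G)
    (A : countZmodType) (Phi : G -> A) (c : G -> R) (beta : R)
    (mu : {measure set (Borel X) -> \bar R}) :
  etale_groupoid r s u mul inv ->
  injective_grading r s u mul Phi ->
  continuous_hom r s mul c ->
  in_Delta r s beta c mu ->
  mu setT != 0%E ->
  ergodic r s mu ->
  (* (1) *)
  (forall C : set A, is_subgroup C ->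
     measurable (XC r s Phi C : set (Borel X)) /\ groupoid_invariant r s (XC r s Phi C)) /\
  (* (2) and (3) *)
  exists B : set A,
    [/\ is_subgroup B,
        mu (~` XC r s Phi B) = 0%E,
        (forall B' : set A, is_subgroup B' -> mu (~` XC r s Phi B') = 0%E -> B' = B) &
        (forall phi : X -> G -> R[i],
           measurable_field_of_states r s u mul inv mu phi ->
           {ae mu, forall x : Borel X, forall g h : G,
               isotropy r s x g -> s h = x ->
               phi x g = phi (r h) (mul (mul h g) (inv h))} ->
           exists psi : A -> R[i],
             state_group B psi /\
             {ae mu, forall x : Borel X, XC r s Phi B x ->
                forall g : G, isotropy r s x g -> psi (Phi g) = phi x g})].
Proof.
move=> et gr _ _ mu0 erg.
have ga' := ga et.
have hXm C : mX (XC r s Phi C) by have H := XC_meas et gr C; exact: H.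
split.
  by move=> C _; split; [exact: hXm | exact: XC_inv ga' gr C].
have Ym a : mX (Ya r s Phi a) by have H := Ya_meas et gr a; exact: H.
have Yi a : groupoid_invariant r s (Ya r s Phi a).
  apply/seteqP; split.
    move=> y [h /= Yh <-]; change ((Phi @` isotropy r s (r h)) a).
    by rewrite -(Phi_iso_eq ga' gr h).
  by move=> x Yx; exists (u x); rewrite /= ?(ga_su ga') ?(ga_ru ga').
have YCm a : mX (~` Ya r s Phi a).
  by have H := Ym a; rewrite /mX in H *; apply: measurableC.
pose B := [set a | mu (~` Ya r s Phi a) = 0%E].
have nT : ~ mu.-negligible setT.
  by move=> /(negligibleP _ measurableT) T0; move: mu0; rewrite T0 eqxx.
have subB : is_subgroup B.
  split.
    change (mu (~` Ya r s Phi 0) = 0%E); rewrite (_ : ~` Ya r s Phi 0 = set0) ?measure0 //.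
    apply/seteqP; split => x //= nY; apply: nY.
    by exists (u x); [exact: iso_u ga' x | exact: Phi_u ga' gr x].
  move=> a b Ba Bb.
  have na : mu.-negligible (~` Ya r s Phi a) := negB (YCm a) Ba.
  have nb : mu.-negligible (~` Ya r s Phi b) := negB (YCm b) Bb.
  apply/(negligibleP _ (YCm _)); apply: negligibleS (negligibleU na nb).
  move=> x nY; apply: contrapT => /not_orP [/contrapT [ga1 iga Pga] /contrapT [gb1 igb Pgb]].
  apply: nY; have [i P] := iso_div ga' gr iga igb.
  by exists (mul (inv gb1) ga1) => //; rewrite P Pga Pgb.
have nXB : mu.-negligible (~` XC r s Phi B).
  pose Z a := if pselect (B a) is left _ then ~` Ya r s Phi a else Ya r s Phi a.
  have H : mu.-negligible (\bigcup_a Z a).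
    apply: neg_countable => a; rewrite /Z; case: pselect => Ba.
      exact: negB (YCm a) Ba.
    case: (erg _ (Ym a) (Yi a)) => Y0; first exact: negB (Ym a) Y0.
    by exfalso; apply: Ba.
  apply: negligibleS H => x nX; apply: contrapT => nZ; apply: nX.
  change (Phi @` isotropy r s x = B); apply/seteqP; split => a.
    move=> Ya'; apply: contrapT => nBa; apply: nZ; exists a => //.
    by rewrite /Z; case: pselect.
  move=> Ba; apply: contrapT => nY; apply: nZ; exists a => //.
  by rewrite /Z; case: pselect.
have XB0 : mu (~` XC r s Phi B) = 0%E.
  by apply/(negligibleP _ (measurableC (hXm B))).
exists B; split => //.
  move=> B' _ XB'0.
  have mXB' : mX (~` XC r s Phi B') by have H := hXm B'; rewrite /mX in H *; apply: measurableC.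
  have nXB' : mu.-negligible (~` XC r s Phi B') := negB mXB' XB'0.
  have [x [XBx XB'x]] : exists x, XC r s Phi B x /\ XC r s Phi B' x.
    apply: contrapT => nx; apply: nT; apply: negligibleS (negligibleU nXB nXB') => x _.
    by apply: contrapT => /not_orP [/contrapT h1 /contrapT h2]; apply: nx; exists x.
  by rewrite -XB'x XBx.
move=> phi [hst hmf] hinv.
case: hinv => N [mN N0 sN].
have hM x : ~ N x -> forall g h, isotropy r s x g -> s h = x ->
    phi x g = phi (r h) (mul (mul h g) (inv h)).
  by move=> nN; apply: contrapT => np; apply: nN; apply: sN; exact: np.
have mM : mX (~` N) by rewrite /mX; apply: measurableC.
have M0 : mu (~` ~` N) = 0%E by rewrite setCK.
pose F b := Fb r s u Phi phi b.
have XBb x b : XC r s Phi B x -> B b -> isotropy r s x (gsel r s u Phi b x) /\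
    Phi (gsel r s u Phi b x) = b.
  move=> XBx Bb; have [g ig Pg] : (Phi @` isotropy r s x) b by rewrite XBx.
  by rewrite (gsel_spec et gr ig Pg).
have Finv b h : B b -> XC r s Phi B (s h) -> ~ N (s h) -> F b (r h) = F b (s h).
  move=> Bb XBx nN; have [ig Pg] := XBb _ _ XBx Bb.
  have [ig' Pg'] := conj_iso ga' gr ig (erefl (s h)).
  rewrite /F /Fb (gsel_spec et gr ig' (etrans Pg' Pg)).
  by rewrite -(hM _ nN _ _ ig erefl).
have XBeq h : XC r s Phi B (s h) <-> XC r s Phi B (r h).
  by rewrite /XC /= (Phi_iso_eq ga' gr h).
have key b : B b -> forall pr : R[i] -> R,
    (forall f, Cc f -> mu_measurable_fun mu (fun x => pr (Sf r s phi f x))) ->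
    exists cc, {ae mu, forall x, XC r s Phi B x -> pr (F b x) = cc}.
  move=> Bb pr hpr; apply: const_ae => // q.
  apply: (erg_mm et erg (M := ~` N)) => //.
    exact: (MeasF et gr hpr Bb q).
  move=> h /= nN; split => -[XB qF].
    have XB' := (XBeq h).1 XB; split => //; by rewrite Finv.
  have XB' := (XBeq h).2 XB; split => //; by rewrite -Finv.
have FF : Filter (nbhs (almost_everywhere mu)) := ae_filter_ringOfSetsType mu.
have hcc a : exists cc : R[i], {ae mu, forall x, XC r s Phi B x -> B a -> F a x = cc}.
  have [Ba|nBa] := pselect (B a); last first.
    exists 0; exists set0; split => //.
    by move=> x /= nP; apply: nP => _ /nBa.
  have [cre hre] := key a Ba (@complex.Re R) (fun f cf => (hmf f cf).1).
  have [cim him] := key a Ba (@complex.Im R) (fun f cf => (hmf f cf).2).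
  exists (cre +i* cim)%C; apply: filterS2 hre him => x h1 h2 XBx _.
  move: (h1 XBx) (h2 XBx); case: (F a x) => a1 b1 /= -> ->.
  by [].
pose cc a := proj1_sig (cid (hcc a)).
have hae : {ae mu, forall x, forall a, XC r s Phi B x -> B a -> F a x = cc a}.
  exact: (@ae_countable _ _ _ mu A (fun a x => XC r s Phi B x -> B a -> F a x = cc a)
    (fun a => proj2_sig (cid (hcc a)))).
pose psi a := if a == 0 then 1 else cc a.
have F0 x : F 0 x = 1.
  rewrite /F /Fb (gsel_spec et gr (iso_u ga' x) (Phi_u ga' gr x)).
  by case: (hst x).
have hpsi : {ae mu, forall x, XC r s Phi B x -> forall a, B a -> psi a = F a x}.
  apply: filterS hae => x H XBx a Ba; rewrite /psi.
  by case: eqP => [->|_]; [rewrite F0 | rewrite H].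
have [x0 [Hx0 XBx0]] : exists x, (XC r s Phi B x -> forall a, B a -> psi a = F a x)
    /\ XC r s Phi B x.
  apply: contrapT => nx; apply: nT.
  have hp : mu.-negligible (~` [set x | XC r s Phi B x -> forall a, B a -> psi a = F a x])
    := hpsi.
  apply: negligibleS (negligibleU hp nXB) => x _.
  by apply: contrapT => /not_orP [/contrapT h1 /contrapT h2]; apply: nx; exists x.
have H0 := Hx0 XBx0.
exists psi; split.
  split; first by rewrite /psi eqxx.
  move=> n cs bs hbs.
  pose gs k := gsel r s u Phi (bs k) x0.
  have igs k := XBb x0 (bs k) XBx0 (hbs k).
  have := (hst x0).2 n cs gs (fun k => (igs k).1).
  congr (0 <= _); apply: eq_bigr => k _; apply: eq_bigr => l _; congr (_ * _).
  have [idv Pdv] := iso_div ga' gr (igs l).1 (igs k).1.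
  have Bd : B (bs l - bs k) by case: subB => _; apply.
  rewrite (H0 _ Bd) /F /Fb; congr (phi x0 _).
  by apply/esym; apply: (gsel_spec et gr idv); rewrite Pdv (igs l).2 (igs k).2.
apply: filterS hpsi => x H XBx g ig.
have Ba : B (Phi g) by rewrite -XBx; exists g.
by rewrite (H XBx _ Ba) /F /Fb (gsel_spec et gr ig erefl).
Qed.
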